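(* Let $\mathcal S$ be the toy stabilizer group of a non-maximal information state on $n$ elementary systems, and let parties $A$ and $B$ hold $k$ and $n-k$ of these elementary systems respectively. Let $\mathcal S_A$ (resp. $\mathcal S_B$) be the subgroup of elements of $\mathcal S$ acting as the identity on every elementary system of $B$ (resp. of $A$), and $\mathcal S_A\cdot\mathcal S_B$ the group they generate. If $\mathcal S = \mathcal S_A\cdot\mathcal S_B$, then the state is not entangled.
   Context: Toy Pauli matrices $\mathcal{X} = \mathrm{diag}(1,-1,1,-1)$, $\mathcal{Y} = \mathrm{diag}(1,-1,-1,1)$, $\mathcal{Z} = \mathrm{diag}(1,1,-1,-1)$; toy Pauli group $G_n = \{\alpha\,p_1\otimes\cdots\otimes p_n: p_i\in\{\mathbb 1_4,\mathcal X,\mathcal Y,\mathcal Z\},\alpha=\pm1\}$. Elements of $G_n$ ''commute'' if their images under the homomorphism $\mathcal X_k\mapsto X_k$, $\mathcal Z_k\mapsto Z_k$, $-\mathbb 1\mapsto -\mathbb 1$ into the $n$-qubit Pauli group commute. A toy stabilizer group is a subgroup of $G_n$ of pairwise ''commuting'' elements not containing $-\mathbb 1$; its epistemic state is the set of ontic states $e_{i_1}\otimes\cdots\otimes e_{i_n}$ fixed by all its elements; it is non-maximal information (mixed) if it has fewer than $n$ independent generators. A product state between $A$ and $B$ is an epistemic state $E_A\times E_B = \{(a,b): a\in E_A, b\in E_B\}$ with $E_A, E_B$ valid epistemic states on $A$ and $B$. The mixture of epistemic states with disjoint ontic bases whose union is a valid epistemic state is the state whose ontic basis is that union. A mixed state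 is entangled if it cannot be written as a mixture of product states. *)

(* Defs.v *)
From mathcomp Require Import all_boot all_order all_algebra.
Set Implicit Arguments. Unset Strict Implicit. Unset Printing Implicit Defensive.
Import GRing.Theory.

(* Toy Pauli labels are encoded in ['I_4]:
   0 = identity 1_4, 1 = X, 2 = Y, 3 = Z.  Ontic states of one elementary
   system e_1..e_4 are encoded in ['I_4] as 0..3. *)
Definition ontic (I : finType) := {ffun I -> 'I_4}.

(* Diagonal entry (j,j) of the toy Pauli matrix p (as an integer +1/-1):
   X = diag(1,-1,1,-1), Y = diag(1,-1,-1,1), Z = diag(1,1,-1,-1). *)
Definition toy_entry (p j : 'I_4) : int :=
  match nat_of_ord p, nat_of_ord j with
  | 1, 1 | 1, 3 => -1
  | 2, 1 | 2, 2 => -1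
  | 3, 2 | 3, 3 => -1
  | _, _ => 1
  end%R.

(* An element alpha p_1 (x) ... (x) p_n of the toy Pauli group:
   first component [true] means alpha = -1. *)
Definition toyP (I : finType) := (bool * {ffun I -> 'I_4})%type.

(* The (diagonal) eigenvalue of g on the ontic basis state s:
   g (e_{s_1} (x) ... (x) e_{s_n}) = toy_eig g s * (e_{s_1} (x) ... ). *)
Definition toy_eig (I : finType) (g : toyP I) (s : ontic I) : int :=
  ((-1) ^+ g.1 * \prod_(i : I) toy_entry (g.2 i) (s i))%R.

(* Product of single-site toy Paulis (diagonal matrix product):
   the Klein four-group table, X*Y = Z, X*Z = Y, Y*Z = X, p*p = 1. *)
Definition pmul (p q : 'I_4) : 'I_4 :=
  match nat_of_ord p, nat_of_ord q with
  | 0, _ => q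
  | _, 0 => p
  | 1, 1 | 2, 2 | 3, 3 => ord0
  | 1, 2 | 2, 1 => inord 3
  | 1, 3 | 3, 1 => inord 2
  | _, _ => inord 1
  end.

Definition toy_mul (I : finType) (g h : toyP I) : toyP I :=
  (g.1 (+) h.1, [ffun i => pmul (g.2 i) (h.2 i)]).

Definition toy_one (I : finType) : toyP I := (false, [ffun => ord0]).
Definition toy_mone (I : finType) : toyP I := (true, [ffun => ord0]).

(* "Commutation": image under X_k |-> X_k, Z_k |-> Z_k (so Y_k |-> X_k Z_k)
   into the qubit Pauli group; two Pauli strings commute iff the number of
   sites where their images anticommute is even (symplectic form). *)
Definition xbit (p : 'I_4) : bool := (nat_of_ord p == 1) || (nat_of_ord p == 2).
Definition zbit (p : 'I_4) : bool := (nat_of_ord p == 2) || (nat_of_ord p == 3).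
Definition site_anticomm (p q : 'I_4) : bool :=
  (xbit p && zbit q) (+) (zbit p && xbit q).
Definition toy_commute (I : finType) (g h : toyP I) : bool :=
  ~~ odd #|[set i : I | site_anticomm (g.2 i) (h.2 i)]|.

(* Subgroups of the toy Pauli group (every element is its own inverse). *)
Definition toy_subgroup (I : finType) (H : {set toyP I}) : bool :=
  (toy_one I \in H) && [forall g in H, forall h in H, toy_mul g h \in H].

Definition toy_gen (I : finType) (A : {set toyP I}) : {set toyP I} :=
  \bigcap_(H : {set toyP I} | toy_subgroup H && (A \subset H)) H.

Definition toy_stab_group (I : finType) (S : {set toyP I}) : Prop :=
  [/\ toy_subgroup S,
      (forall g h, g \in S -> h \in S -> toy_commute g h)
    & toy_mone I \notin S].

Definition epistemic (I : finType) (S : {set toyP I}) : {set ontic I} :=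
  [set s | [forall g in S, toy_eig g s == 1%R]].

Definition valid_epistemic (I : finType) (E : {set ontic I}) : Prop :=
  exists S : {set toyP I}, toy_stab_group S /\ E = epistemic S.

Definition toy_independent (I : finType) (gs : seq (toyP I)) : Prop :=
  uniq gs /\ forall g, g \in gs -> g \notin toy_gen [set x in gs | x != g].

Definition non_maximal (I : finType) (S : {set toyP I}) : Prop :=
  exists gs : seq (toyP I),
    [/\ size gs < #|I|, toy_independent gs & toy_gen [set x in gs] = S].

Definition sysA (n : nat) (A : {set 'I_n}) := {i : 'I_n | i \in A}.
Definition sysB (n : nat) (A : {set 'I_n}) := {i : 'I_n | i \in ~: A}.

Definition restrA (n : nat) (A : {set 'I_n}) (s : ontic 'I_n) : ontic (sysA A) :=
  [ffun i => s (val i)].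
Definition restrB (n : nat) (A : {set 'I_n}) (s : ontic 'I_n) : ontic (sysB A) :=
  [ffun i => s (val i)].

(* Product state E_A x E_B, identifying an ontic state with the pair of
   its restrictions to A and B. *)
Definition prod_state (n : nat) (A : {set 'I_n})
  (EA : {set ontic (sysA A)}) (EB : {set ontic (sysB A)}) : {set ontic 'I_n} :=
  [set s | (restrA A s \in EA) && (restrB A s \in EB)].

Definition mixture_of_products (n : nat) (A : {set 'I_n}) (E : {set ontic 'I_n}) : Prop :=
  exists (m : nat) (EA : 'I_m -> {set ontic (sysA A)}) (EB : 'I_m -> {set ontic (sysB A)}),
    [/\ forall j, valid_epistemic (EA j) /\ valid_epistemic (EB j),
        forall j1 j2, j1 != j2 ->
          [disjoint prod_state (EA j1) (EB j1) & prod_state (EA j2) (EB j2)]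
      & E = \bigcup_(j < m) prod_state (EA j) (EB j)].

Definition entangled (n : nat) (A : {set 'I_n}) (E : {set ontic 'I_n}) : Prop :=
  ~ mixture_of_products A E.

Definition S_A (n : nat) (A : {set 'I_n}) (S : {set toyP 'I_n}) : {set toyP 'I_n} :=
  [set g in S | [forall i in ~: A, nat_of_ord (g.2 i) == 0]].
Definition S_B (n : nat) (A : {set 'I_n}) (S : {set toyP 'I_n}) : {set toyP 'I_n} :=
  [set g in S | [forall i in A, nat_of_ord (g.2 i) == 0]].

(* Main.v *)
Require Import Defs.
From mathcomp Require Import all_boot all_order all_algebra.
Set Implicit Arguments. Unset Strict Implicit. Unset Printing Implicit Defensive.
Import GRing.Theory.
Local Open Scope ring_scope.

Lemma entry_mul (p q j : 'I_4) : toy_entry (pmul p q) j = toy_entry p j * toy_entry q j.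
Proof.
case: p => [[|[|[|[|?]]]] ?] //.
all: case: q => [[|[|[|[|?]]]] ?] //.
all: case: j => [[|[|[|[|?]]]] ?] //.
all: rewrite /pmul /= /toy_entry ?inordK //.
Qed.

Lemma entry0 (j : 'I_4) : toy_entry ord0 j = 1.
Proof. by case: j => [[|[|[|[|?]]]] ?]. Qed.

Lemma eig_mul (I : finType) (g h : toyP I) s :
  toy_eig (toy_mul g h) s = toy_eig g s * toy_eig h s.
Proof.
rewrite /toy_eig /toy_mul /=.
under eq_bigr => i _ do rewrite ffunE entry_mul.
rewrite big_split /=.
have -> : (-1) ^+ (g.1 (+) h.1) = ((-1) ^+ g.1 * (-1) ^+ h.1 :> int).
  by case: g.1; case: h.1; rewrite /= ?expr0 ?expr1 ?mulr1 ?mul1r ?mulrNN ?mulr1.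
by rewrite mulrACA.
Qed.

Definition resA (n : nat) (B : {set 'I_n}) (g : toyP 'I_n) : toyP (sysA B) :=
  (g.1, [ffun i => g.2 (val i)]).

Definition supp (n : nat) (B : {set 'I_n}) (g : toyP 'I_n) :=
  forall i, i \notin B -> g.2 i = ord0.

Lemma suppT n (B : {set 'I_n}) S g : g \in S_A B S -> supp B g.
Proof.
rewrite inE => /andP[_ /forall_inP H] i iB; apply/val_inj => /=.
by apply/eqP; apply: H; rewrite in_setC.
Qed.

Lemma eig_res n (B : {set 'I_n}) g s : supp B g ->
  toy_eig (resA B g) (restrA B s) = toy_eig g s.
Proof.
move=> H; rewrite /toy_eig /=; congr (_ * _).
rewrite (bigID (fun i => i \in B)) /= [X in _ = _ * X]big1 ?mulr1; last first.
  by move=> i /H ->; rewrite entry0.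
rewrite [RHS]big_sub; apply: eq_bigr => i _; by rewrite !ffunE.
Qed.

Lemma comm_res n (B : {set 'I_n}) g h : supp B g ->
  toy_commute (resA B g) (resA B h) = toy_commute g h.
Proof.
move=> H; rewrite /toy_commute; congr (~~ odd _).
have -> : [set i | site_anticomm (g.2 i) (h.2 i)] =
   val @: [set i : sysA B | site_anticomm ((resA B g).2 i) ((resA B h).2 i)].
  apply/setP => i; rewrite inE; apply/idP/imsetP.
    case: (boolP (i \in B)) => iB.
      by move=> Hi; exists (exist _ i iB) => //; rewrite inE !ffunE.
    by rewrite H.
  by case=> j; rewrite inE !ffunE => Hj ->.
by rewrite card_imset //; apply: val_inj.
Qed.

Lemma stab_res n (B : {set 'I_n}) S : toy_stab_group S ->
  toy_stab_group (resA B @: S_A B S).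
Proof.
case=> /andP[S1 /forall_inP SM] SC Sm.
have T1 : toy_one 'I_n \in S_A B S.
  rewrite inE S1 /=; apply/forall_inP => i _; by rewrite ffunE.
have TM : forall g h, g \in S_A B S -> h \in S_A B S -> toy_mul g h \in S_A B S.
  move=> g h gT hT; have sg := suppT gT; have sh := suppT hT.
  move: gT hT; rewrite !inE => /andP[gS _] /andP[hS _].
  rewrite (forall_inP (SM g gS) h hS) /=; apply/forall_inP => i; rewrite in_setC => iB.
  by rewrite ffunE sg // sh.
split.
- apply/andP; split.
    apply/imsetP; exists (toy_one 'I_n) => //.
    by rewrite /resA /toy_one /=; congr pair; apply/ffunP => i; rewrite !ffunE.
  apply/forall_inP => x /imsetP[g gT ->]; apply/forall_inP => y /imsetP[h hT ->].
  apply/imsetP; exists (toy_mul g h); first exact: TM.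
  by rewrite /resA /toy_mul /=; congr pair; apply/ffunP => i; rewrite !ffunE.
- move=> x y /imsetP[g gT ->] /imsetP[h hT ->]; rewrite comm_res; last exact: suppT gT.
  by move: gT hT; rewrite !inE => /andP[gS _] /andP[hS _]; apply: SC.
- apply/imsetP => -[g gT E]; apply/negP: Sm; rewrite negbK.
  have sg := suppT gT; move: gT; rewrite inE => /andP[gS _].
  have -> : toy_mone 'I_n = g; last by [].
  case: g E sg gS => [b f] /= E sg _; case: E => <- Ef; congr pair.
  apply/ffunP => i; rewrite ffunE; case: (boolP (i \in B)) => iB; last by rewrite sg.
  by have := congr1 (fun F : {ffun sysA B -> 'I_4} => F (exist _ i iB)) Ef; rewrite !ffunE.
Qed.

Lemma epi_res n (B : {set 'I_n}) S s : s \in epistemic S ->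
  restrA B s \in epistemic (resA B @: S_A B S).
Proof.
rewrite !inE => /forall_inP H; apply/forall_inP => x /imsetP[g gT ->].
rewrite eig_res; last exact: suppT gT.
by apply: H; move: gT; rewrite inE => /andP[].
Qed.

Lemma epi_res2 n (B : {set 'I_n}) S s g :
  restrA B s \in epistemic (resA B @: S_A B S) -> g \in S_A B S -> toy_eig g s = 1.
Proof.
rewrite inE => /forall_inP H gT; rewrite -(eig_res s (suppT gT)); apply/eqP.
by apply: H; apply: imset_f.
Qed.

Theorem mainTheorem8 (n : nat) (A : {set 'I_n}) (S : {set toyP 'I_n}) :
  toy_stab_group S ->
  non_maximal S ->
  S = toy_gen (S_A A S :|: S_B A S) ->
  ~ entangled A (epistemic S).
Proof.
move=> HS _ HG; apply.
have EB : S_B A S = S_A (~: A) S by rewrite /S_A setCK.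
exists 1%N, (fun _ => epistemic (resA A @: S_A A S)),
  (fun _ => epistemic (resA (~: A) @: S_A (~: A) S)).
split.
- move=> _; split.
    by exists (resA A @: S_A A S); split => //; apply: stab_res.
  by exists (resA (~: A) @: S_A (~: A) S); split => //; apply: stab_res.
- by move=> j1 j2; rewrite !ord1 eqxx.
rewrite big_ord1; apply/setP => s; rewrite /prod_state [in RHS]inE; apply/idP/andP.
  by move=> Hs; split; [apply: epi_res | exact: (epi_res (~: A) Hs)].
case=> h1 h2; rewrite inE; apply/forall_inP => g gS.
have : g \in [set x | toy_eig x s == 1]; last by rewrite inE.
move: gS; rewrite {1}HG => /bigcapP; apply; apply/andP; split.
  apply/andP; split.
    rewrite inE /toy_eig /= expr0 mul1r big1 // => i _; by rewrite ffunE entry0.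
  apply/forall_inP => x; rewrite inE => /eqP x1; apply/forall_inP => y.
  by rewrite !inE eig_mul x1 => /eqP ->.
apply/subsetP => x; rewrite EB => /setUP[] xT; rewrite inE; apply/eqP.
  exact: epi_res2 h1 xT.
exact: (epi_res2 (B := ~: A) h2 xT).
Qed.
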